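(* Let $d,k\in\mathbb{N}$ with $k\ge2$ and $d>2k$, and put $n=d-2k$. Let $\phi=\alpha\phi_1+\beta\phi_2$ with $\alpha,\beta>0$. Then every $\mathbf{z}\in\Lambda_1$ with $\phi[\mathbf{z}]=\min\{\phi[\mathbf{u}]:\mathbf{u}\in\Lambda_1\}$ can be written as $$\mathbf{z}=\operatorname{sgn}(l)\,\chi_S+\frac{a}{n}\mathbf{j}$$ for some integers $l,a$ with $-\frac d2\le l<\frac d2$ and some $S\subseteq\{1,\dots,d\}$ with $|S|=|l|$ (i.e. up to a permutation of coordinates $\mathbf{z}=\operatorname{sgn}(l)[1^{|l|},0^{d-|l|}]+\frac an\mathbf{j}$). Moreover, each such minimal $\mathbf{z}$ has only one representation of this type.
   Context: $\mathbf{e}_1,\dots,\mathbf{e}_d$ is the standard basis of $\mathbb{R}^d$, $\mathbf{j}=(1,\dots,1)$, $\chi_S$ the indicator vector of $S$, and $\operatorname{sgn}(0)=0$. $L^1$ is the set of vectors in $\mathbb{Z}^d$ with $k$ coordinates $-1$ and $d-k$ coordinates $1$; $\Lambda$ is the $\mathbb{Z}$-span of $\mathbf{e}_1,\dots,\mathbf{e}_d,\frac{\mathbf{j}}{n}$; $\Lambda_1=\{\mathbf{z}\in\Lambda:\ \mathbf{z}\cdot\boldsymbol{\ell}\equiv1\pmod2\ \forall\boldsymbol{\ell}\in L^1\}$. $\phi_1[\mathbf{x}]=(\sum_ix_i)^2$, $\phi_2[\mathbf{x}]=\bigl|\mathbf{x}-\frac{\sum_ix_i}{d}\mathbf{j}\bigr|^2$.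 *)

(* Defs.v *)
From HB Require Import structures.
From mathcomp Require Import all_boot all_order all_algebra.
Set Implicit Arguments. Unset Strict Implicit. Unset Printing Implicit Defensive.
Import Order.TTheory GRing.Theory Num.Theory.
Local Open Scope ring_scope.

Section Defs.
Variable R : realFieldType.

Definition jvec (d : nat) : 'rV[R]_d := const_mx 1.

Definition chi (d : nat) (S : {set 'I_d}) : 'rV[R]_d := \row_i (i \in S)%:R.

Definition dot (d : nat) (x y : 'rV[R]_d) : R := \sum_i x 0 i * y 0 i.

Definition csum (d : nat) (x : 'rV[R]_d) : R := \sum_i x 0 i.

Definition in_L1 (d k : nat) (l : 'rV[int]_d) : Prop :=
  (forall i, l 0 i = 1 \/ l 0 i = -1) /\ #|[set i | l 0 i == -1]| = k.

Definition in_Lambda (d n : nat) (z : 'rV[R]_d) : Prop :=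
  exists (m : 'rV[int]_d) (a : int),
    z = map_mx (fun t : int => t%:~R) m + ((a%:~R) / n%:R) *: jvec d.

(* x ≡ 1 (mod 2) for a real x: x is an odd integer *)
Definition odd_real (x : R) : Prop := exists t : int, x = (2 * t + 1)%:~R.

Definition in_Lambda1 (d k : nat) (z : 'rV[R]_d) : Prop :=
  in_Lambda (d - 2 * k) z /\
  forall l : 'rV[int]_d, in_L1 k l ->
    odd_real (dot z (map_mx (fun t : int => t%:~R) l)).

Definition phi1 (d : nat) (x : 'rV[R]_d) : R := (csum x) ^+ 2.

Definition phi2 (d : nat) (x : 'rV[R]_d) : R :=
  \sum_i (x 0 i - csum x / d%:R) ^+ 2.

Definition phi (d : nat) (alpha beta : R) (x : 'rV[R]_d) : R :=
  alpha * phi1 x + beta * phi2 x.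

Definition is_rep (d n : nat) (z : 'rV[R]_d) (l a : int) (S : {set 'I_d}) : Prop :=
  [/\ - (d%:R / 2) <= (l%:~R : R), (l%:~R : R) < d%:R / 2,
      #|S| = `|l|%N &
      z = (sgz l)%:~R *: chi S + ((a%:~R) / n%:R) *: jvec d].

End Defs.

(* Main.v *)
Require Import Defs.
From HB Require Import structures.
From mathcomp Require Import all_boot all_order all_algebra.
From mathcomp Require Import zify ring lra.
Import Order.TTheory GRing.Theory Num.Theory.
Local Open Scope ring_scope.

Section Helpers.
Variable R : realFieldType.

Lemma sum_ind d (F : 'I_d -> R) j : \sum_t (t == j)%:R * F t = F j.
Proof.
rewrite (bigD1 j) //= eqxx mul1r big1 ?addr0 // => t /negbTE ->.
by rewrite mul0r.
Qed.

Lemma sum_two d (H : 'I_d -> R) i j : i != j ->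
  (forall t, t != i -> t != j -> H t = 0) -> \sum_t H t = H i + H j.
Proof.
move=> hij h0; rewrite (bigD1 i) //= (bigD1 j) 1?eq_sym //= big1 ?addr0 ?addrA //.
by move=> t /andP[hi hj]; apply: h0.
Qed.

Lemma sum_indS d (S : {set 'I_d}) : \sum_t ((t \in S)%:R : R) = #|S|%:R.
Proof.
rewrite -sum1_card natr_sum [RHS]big_mkcond /=; apply: eq_bigr => t _.
by case: (t \in S).
Qed.

Lemma sum_ind1 d (j : 'I_d) : \sum_t ((t == j)%:R : R) = 1.
Proof.
transitivity (\sum_t ((t == j)%:R : R) * 1); first by apply: eq_bigr => t _; rewrite mulr1.
exact: (@sum_ind d (fun=> 1) j). Qed.

End Helpers.

Section Uniq.
Variable R : realFieldType.

Lemma csum_rep d n (l a : int) (S : {set 'I_d}) : #|S| = `|l|%N ->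
  \sum_t ((sgz l)%:~R *: chi R S + (a%:~R / n%:R) *: jvec R d) 0 t
   = l%:~R + d%:R * (a%:~R / n%:R).
Proof.
move=> cS; rewrite /chi /jvec.
under eq_bigr do rewrite !mxE mulr1.
rewrite big_split /= -mulr_sumr sum_indS sumr_const card_ord cS.
rewrite [in RHS](intEsg l) intrM mulr_natl; congr (_ + _).
Qed.

Lemma rep_uniq d n (z : 'rV[R]_d) l a S l' a' S' : (0 < d)%N -> (0 < n)%N ->
  is_rep n z l a S -> is_rep n z l' a' S' -> [/\ l' = l, a' = a & S' = S].
Proof.
move=> d0 n0 [lo hi cS ez] [lo' hi' cS' ez'].
have hn : (n%:R : R) != 0 by rewrite pnatr_eq0 -lt0n.
have ecoord t : (sgz l)%:~R * (t \in S)%:R + a%:~R / n%:R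
   = (sgz l')%:~R * (t \in S')%:R + a'%:~R / n%:R :> R.
  have := congr1 (fun x : 'rV[R]_d => x 0 t) (etrans (esym ez) ez').
  by rewrite /chi /jvec !mxE !mulr1.
have esum : (l%:~R + d%:R * (a%:~R / n%:R) : R) = l'%:~R + d%:R * (a'%:~R / n%:R).
  by rewrite -(@csum_rep d n l a S cS) -(@csum_rep d n l' a' S' cS') -ez -ez'.
pose i0 := Ordinal d0.
pose e : int := sgz l * ((i0 \in S) : nat)%:Z - sgz l' * ((i0 \in S') : nat)%:Z.
have eD : (a'%:~R / n%:R - a%:~R / n%:R : R) = e%:~R.
  have := ecoord i0; rewrite /e intrB !intrM.
  rewrite (_ : ((i0 \in S : nat)%:Z)%:~R = (i0 \in S)%:R :> R) //.
  rewrite (_ : ((i0 \in S' : nat)%:Z)%:~R = (i0 \in S')%:R :> R) //.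
  move=> h; lra.
have dpos : 0 < d%:R :> R by rewrite ltr0n.
have le : (l%:~R - l'%:~R : R) = d%:R * e%:~R by rewrite -eD mulrBr; lra.
have he : e = 0.
  have h1 : (-1 : R) < e%:~R by nra.
  have h2 : e%:~R < 1 :> R by nra.
  have : (-1 < e)%R by rewrite -(ltr_int R) mulrN1z.
  have : (e < 1)%R by rewrite -(ltr_int R).
  lia.
have ell : l' = l.
  apply/eqP; rewrite -(eqr_int R); apply/eqP.
  by move: le; rewrite he mulr0; lra.
have eaa : a' = a.
  move: eD; rewrite he /= => /eqP; rewrite subr_eq0 => /eqP /(mulIf (invr_neq0 hn)) /eqP.
  by rewrite eqr_int => /eqP.
subst l' a'; split => //.
have [l0|lnz] := eqVneq l 0.
  subst l; rewrite /= in cS cS'.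
  by rewrite (cards0_eq cS) (cards0_eq cS').
have sgnz : ((sgz l)%:~R : R) != 0.
  by rewrite intr_eq0 sgz_eq0.
apply/setP => t; have := ecoord t; move/addIr/(mulfI sgnz).
by case: (t \in S); case: (t \in S') => //= /eqP; rewrite ?oner_eq0 // eq_sym oner_eq0.
Qed.
End Uniq.

Theorem lemma2 (R : realFieldType) (d k : nat) (alpha beta : R)
  (hk : (2 <= k)%N) (hd : (2 * k < d)%N)
  (halpha : 0 < alpha) (hbeta : 0 < beta)
  (z : 'rV[R]_d) (hz : in_Lambda1 k z)
  (hmin : forall u : 'rV[R]_d, in_Lambda1 k u -> phi alpha beta z <= phi alpha beta u) :
  exists (l a : int) (S : {set 'I_d}),
    is_rep (d - 2 * k) z l a S /\
    (forall (l' a' : int) (S' : {set 'I_d}),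
        is_rep (d - 2 * k) z l' a' S' -> [/\ l' = l, a' = a & S' = S]).
Proof.
have d0 : (0 < d)%N by lia.
have n0 : (0 < d - 2 * k)%N by rewrite subn_gt0.
have hz' := hz.
case: hz' => [[m [a Hz]] Hodd].
have hn : ((d - 2 * k)%:R : R) != 0 by rewrite pnatr_eq0 -lt0n.
have zE t : z 0 t = (m 0 t)%:~R + a%:~R / (d - 2 * k)%:R.
  by rewrite Hz /jvec !mxE mulr1.
have key : forall i j, (m 0 i - m 0 j <= 1)%R.
  move=> i j; rewrite leNgt; apply/negP => hlt.
  have hij : i != j by apply: contraTneq hlt => ->; rewrite subrr.
  pose del : 'rV[int]_d := \row_t ((t == j)%:R - (t == i)%:R).
  pose u : 'rV[R]_d := z + map_mx (fun t : int => t%:~R) del.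
  have uE t : u 0 t = z 0 t + (t == j)%:R - (t == i)%:R.
    by rewrite /u !mxE intrB !mulrz_nat addrA.
  have hu : in_Lambda1 k u.
    split.
      exists (m + del), a; apply/rowP => t.
    by rewrite /u !mxE zE (intrD _ (m 0 t)) mulr1 addrAC.
    move=> L hL; have [t Ht] := Hodd L hL.
    have dotE : dot u (map_mx (fun t : int => t%:~R) L)
        = dot z (map_mx (fun t : int => t%:~R) L) + (L 0 j)%:~R - (L 0 i)%:~R.
      rewrite /dot; under eq_bigr do rewrite uE mulrBl mulrDl.
      by rewrite sumrB big_split /= !sum_ind !mxE.
    have [hLi|hLi] := hL.1 i; have [hLj|hLj] := hL.1 j;
      rewrite dotE Ht hLi hLj; [exists t | exists (t-1) | exists (t+1)| exists t];
      rewrite -intrD -intrB; congr (_%:~R); lia.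
  have := hmin u hu; apply/negP; rewrite -ltNge.
  have csE : csum u = csum z.
    rewrite /csum; under eq_bigr do rewrite uE.
    by rewrite sumrB big_split /= !sum_ind1 addrK.
  rewrite /phi /phi1 /phi2 csE.
  set mu := csum z / d%:R.
  have hs : \sum_t (u 0 t - mu)^+2 = \sum_t (z 0 t - mu)^+2 +
     (((u 0 i - mu)^+2 - (z 0 i - mu)^+2) + ((u 0 j - mu)^+2 - (z 0 j - mu)^+2)).
    rewrite -(@sum_two R d (fun t => (u 0 t - mu)^+2 - (z 0 t - mu)^+2) i j hij); last first.
      by move=> t ti tj; rewrite uE (negbTE ti) (negbTE tj) subr0 addr0 subrr.
    by rewrite sumrB addrC subrK.
  rewrite hs !uE eqxx (negbTE hij) [j == i]eq_sym (negbTE hij).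
  have h2 : (2:R) <= z 0 i - z 0 j.
    rewrite !zE; have : ((2:int)%:~R : R) <= (m 0 i - m 0 j)%:~R by rewrite ler_int; lia.
    rewrite intrB; lra.
  rewrite eqxx /=.
  have hneg : beta * (2 - 2 * (z 0 i - z 0 j)) < 0 by nra.
  nra.
pose i0 := Ordinal d0.
have [c hc] : exists c : int, forall t, (c <= m 0 t)%R /\ (m 0 t <= c + 1)%R.
  case: (boolP [exists t, m 0 t == m 0 i0 - 1]) => [/existsP [t0 /eqP ht0] | /existsPn hno].
    exists (m 0 i0 - 1) => t; have := key t t0; have := key i0 t; lia.
  exists (m 0 i0) => t; have := key t i0; have := key i0 t; have := hno t; lia.
pose S0 := [set t | m 0 t != c].
have mS t : (m 0 t)%:~R = c%:~R + (t \in S0)%:R :> R.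
  rewrite inE; have := hc t; case: eqP => [->|ne] /= h; first by rewrite addr0.
  have -> : m 0 t = c + 1 by lia.
  by rewrite intrD.
have fE x : (((a + x * ((d - 2 * k)%N : int))%:~R / (d - 2 * k)%:R) : R)
    = a%:~R / (d - 2 * k)%:R + x%:~R.
  by rewrite intrD intrM mulrDl mulfK.
have zE' t : z 0 t = (t \in S0)%:R + c%:~R + a%:~R / (d - 2 * k)%:R.
  by rewrite zE mS; lra.
have sd : (#|S0| <= d)%N by rewrite -[X in (_ <= X)%N](card_ord d) max_card.
have [small|big] := ltnP (2 * #|S0|) d.
  have hrep : is_rep (d - 2 * k) z (#|S0|%:Z) (a + c * ((d - 2 * k)%N : int)) S0.
    split => //.
    - have : (0 : R) <= (#|S0|%:Z)%:~R by rewrite ler0z.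
      have : (0 : R) < d%:R by rewrite ltr0n.
      lra.
    - have hs : ((#|S0|%:Z)%:~R : R) = #|S0|%:R by [].
      rewrite hs; have : ((2 * #|S0|)%:R : R) < d%:R by rewrite ltr_nat.
      rewrite natrM; lra.
    - apply/rowP => t; rewrite zE' /chi /jvec !mxE mulr1 fE.
      case: (boolP (t \in S0)) => ht /=; last by rewrite mulr0; lra.
      have : (0 < #|S0|)%N by apply/card_gt0P; exists t.
      move=> s0; rewrite gtr0_sgz; last by rewrite ltz_nat.
      rewrite mulr1; lra.
  exists (#|S0|%:Z), (a + c * ((d - 2 * k)%N : int)), S0; split => //.
  by move=> l' a' S' h; exact: (rep_uniq _ _ _ _ _ _ _ _ _ _ d0 n0 hrep h).
have cC : #|~: S0| = (d - #|S0|)%N.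
  by have := cardsC S0; rewrite card_ord; lia.
have hrep : is_rep (d - 2 * k) z (- ((d - #|S0|)%N : int))
   (a + (c + 1) * ((d - 2 * k)%N : int)) (~: S0).
  split.
  - rewrite intrN (_ : (((d - #|S0|)%N : int)%:~R : R) = (d - #|S0|)%:R) // natrB //.
    have : (d%:R : R) <= (2 * #|S0|)%:R by rewrite ler_nat.
    rewrite natrM; lra.
  - rewrite intrN (_ : (((d - #|S0|)%N : int)%:~R : R) = (d - #|S0|)%:R) // natrB //.
    have : (#|S0|%:R : R) <= d%:R by rewrite ler_nat.
    have : (0 : R) < d%:R by rewrite ltr0n.
    lra.
  - by rewrite cC abszN absz_nat.
  - apply/rowP => t; rewrite zE' /chi /jvec !mxE mulr1 fE in_setC.
    case: (boolP (t \in S0)) => ht /=.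
      rewrite mulr0 add0r intrD; lra.
    have : (0 < d - #|S0|)%N by rewrite -cC; apply/card_gt0P; exists t; rewrite in_setC.
    move=> s0; rewrite sgzN gtr0_sgz; last by rewrite ltz_nat.
    rewrite intrD; lra.
exists (- ((d - #|S0|)%N : int)), (a + (c + 1) * ((d - 2 * k)%N : int)), (~: S0); split => //.
by move=> l' a' S' h; exact: (rep_uniq _ _ _ _ _ _ _ _ _ _ d0 n0 hrep h).
Qed.
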